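(* For the ring grooming instance with $n=15$, $c=1$ and uniform traffic $d_{jk}=1$ for all $j\ne k$, the minimum number of ADMs is $m=105$, attained by a routing using $35$ rings with exactly three ADMs each.
   Context: Ring grooming. An instance consists of integers $n\ge 2$ (ring size) and $c\ge 1$ (capacity), and a finite list $L$ of unordered pairs $\{j,k\}$ with $j\ne k$, $j,k\in\{1,\dots,n\}$ (repetitions allowed); these are the traffic demands. Let $d_{jk}=d_{kj}$ be the number of times $\{j,k\}$ occurs in $L$ (the traffic matrix; $d_{jj}=0$). Let $C_n$ be the cycle graph on vertices $1,\dots,n$ in cyclic order, with edges $\{l,l+1\}$ for $1\le l<n$ and $\{n,1\}$. A solution uses some finite number $r$ of ''rings'', each a copy of $C_n$ in which every edge has capacity $c$. A routing specifies, for every ring $i$ and every pair $j<k$, nonnegative integers $t^0_{ijk},t^1_{ijk}$: the amounts of $\{j,k\}$-traffic sent on ring $i$ along each of the two arcs of $C_n$ between $j$ and $k$. It is feasible if $\sum_i (t^0_{ijk}+t^1_{ijk})=d_{jk}$ for all $j<k$, and for every ring $i$ and every edge $e$ of $C_n$ the total traffic routed on ring $i$ along arcs containing $e$ is at most $c$. Ring $i$ needs an ADM (add/drop multiplexer) at vertex $j$ iff some traffic with endpoint $j$ is routed on ring $i$. The cost of a routing is the total number of ADMs, i.e. the number of pairs (ring $i$, vertex $j$) at which an ADM is needed. $m=m(n,c,L)$ denotes the minimum cost over all feasible routings. *)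

(* Defs.v *)
From mathcomp Require Import all_boot.
Set Implicit Arguments. Unset Strict Implicit. Unset Printing Implicit Defensive.

(* Vertices of C_n are 'I_n = {0,...,n-1} (paper's vertex v+1 is our v).
   Edge l : 'I_n of C_n is {l, l+1 mod n}.  For j < k, arc 0 between j and k
   is the path j, j+1, ..., k, containing exactly the edges l with j <= l < k;
   arc 1 is the other arc, containing the remaining edges. *)
Definition on_arc (n : nat) (j k l : 'I_n) (b : bool) : bool :=
  if b then ~~ ((j <= l) && (l < k)) else (j <= l) && (l < k).

Definition traffic (n : nat) (L : seq ('I_n * 'I_n)) (j k : 'I_n) : nat :=
  count (fun p => (p == (j, k)) || (p == (k, j))) L.

Definition demand_list_ok (n : nat) (L : seq ('I_n * 'I_n)) : bool :=
  all (fun p => p.1 != p.2) L.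

(* A routing on r rings: t i j k b = t^b_{ijk} (only pairs j < k are used). *)
Definition routing (n r : nat) := 'I_r -> 'I_n -> 'I_n -> bool -> nat.

Definition feasible (n c : nat) (L : seq ('I_n * 'I_n)) (r : nat)
    (t : routing n r) : Prop :=
  (forall j k : 'I_n, j < k ->
     \sum_(i < r) (t i j k false + t i j k true) = traffic L j k) /\
  (forall (i : 'I_r) (l : 'I_n),
     \sum_(j < n) \sum_(k < n | j < k)
        (\sum_(b : bool | on_arc j k l b) t i j k b) <= c).

Definition needs_adm (n r : nat) (t : routing n r) (i : 'I_r) (v : 'I_n) : bool :=
  [exists j : 'I_n, exists k : 'I_n,
     [&& j < k, (j == v) || (k == v) & 0 < t i j k false + t i j k true]].

Definition adms_on_ring (n r : nat) (t : routing n r) (i : 'I_r) : nat :=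
  #|[set v : 'I_n | needs_adm t i v]|.

Definition cost (n r : nat) (t : routing n r) : nat :=
  \sum_(i < r) adms_on_ring t i.

Definition is_min_cost (n c : nat) (L : seq ('I_n * 'I_n)) (m : nat) : Prop :=
  (exists (r : nat) (t : routing n r), feasible c L t /\ cost t = m) /\
  (forall (r : nat) (t : routing n r), feasible c L t -> m <= cost t).

(* Uniform traffic: every unordered pair {j,k}, j != k, occurs exactly once. *)
Definition all_pairs (n : nat) : seq ('I_n * 'I_n) :=
  [seq p <- [seq (j, k) | j <- enum 'I_n, k <- enum 'I_n] | (p : 'I_n * 'I_n).1 < p.2].

(* Main.v *)
Require Import Defs.
From mathcomp Require Import all_boot zify.

Lemma sum_iota n (F : 'I_n -> nat) (G : nat -> nat) :
  (forall j : 'I_n, F j = G j) -> \sum_(j < n) F j = sumn [seq G j | j <- iota 0 n].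
Proof.
move=> H; rewrite (eq_bigr (fun j : 'I_n => G j)) //.
by rewrite -(big_mkord xpredT G) /index_iota subn0 sumnE big_map.
Qed.

Lemma exists_iota n (P : 'I_n -> bool) (Q : nat -> bool) :
  (forall j : 'I_n, P j = Q j) -> [exists j, P j] = has Q (iota 0 n).
Proof.
move=> H; apply/existsP/hasP => [[j]|[x]].
  by rewrite H => Hj; exists (val j) => //; rewrite mem_iota /= ltn_ord.
rewrite mem_iota add0n => /andP[_ lt] Qx.
by exists (Ordinal lt); rewrite H.
Qed.

Lemma card_iota n (P : 'I_n -> bool) (Q : nat -> bool) :
  (forall j : 'I_n, P j = Q j) -> #|[set v | P v]| = count Q (iota 0 n).
Proof.
move=> H; rewrite -sum1dep_card big_mkcond /= -sumn_count.
apply: sum_iota => j; by rewrite H; case: (Q j).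
Qed.

Lemma traffic_all_pairs n (j k : 'I_n) : j != k -> traffic (all_pairs n) j k = 1.
Proof.
wlog lt : j k / j < k.
  move=> W ne; case: (ltngtP j k) => [l|l|e]; first exact: W.
  - have -> : traffic (all_pairs n) j k = traffic (all_pairs n) k j.
      by apply: eq_count => p; rewrite orbC.
    by apply: W => //; rewrite eq_sym.
  - by move: ne; rewrite (val_inj e) eqxx.
move=> _; rewrite /traffic /all_pairs count_filter.
rewrite (eq_count (a2 := pred1 (j, k))).
  rewrite count_uniq_mem.
    apply/eqP; rewrite eqb1. apply/flatten_mapP; exists j; first by rewrite mem_enum.
    by apply/mapP; exists k; rewrite ?mem_enum.
  apply: allpairs_uniq_dep; rewrite ?enum_uniq //.
  by move=> [a b] [c d] _ _ /= [-> ->].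
move=> [x y] /=; rewrite !xpair_eqE.
rewrite -!val_eqE /=; move: lt; move: (val x) (val y) (val j) (val k) => a b c d.
case: (a =P c) => [<-|_]; case: (b =P d) => [<-|_] /= lt; rewrite ?lt ?andbF ?andbT //=.
all: try (apply/negbTE/negP; lia).

Qed.

Section RB.
Variables (n r : nat) (t : routing n r) (i : 'I_r).
Let tf (j k : 'I_n) := t i j k false.
Let tt (j k : 'I_n) := t i j k true.
Let load (l : 'I_n) := \sum_(j < n) \sum_(k < n | j < k)
        (\sum_(b : bool | on_arc j k l b) t i j k b).
Let s (l : 'I_n) := \sum_(k < n | l < k) tf l k + \sum_(j < n | j < l) tt j l.

Lemma sum_s : \sum_(j < n) \sum_(k < n | j < k) (t i j k false + t i j k true) = \sum_l s l.
Proof.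
transitivity (\sum_(j < n) (\sum_(k < n | j < k) tf j k + \sum_(k < n | j < k) tt j k)).
  by apply: eq_bigr => j _; rewrite big_split.
rewrite big_split /s big_split /=; congr (_ + _).
by rewrite (exchange_big_dep xpredT).
Qed.

Lemma s_load l : s l <= load l.
Proof.
have E1 : \sum_(j < n) \sum_(k < n | j < k) (if j == l then tf j k else 0) = \sum_(k < n | l < k) tf l k.
  rewrite (eq_bigr (fun j => if j == l then \sum_(k < n | j < k) tf j k else 0)).
    by rewrite -big_mkcond big_pred1_eq.
  by move=> j _; case: eqP => // _; rewrite big1.
have E2 : \sum_(j < n) \sum_(k < n | j < k) (if k == l then tt j k else 0) = \sum_(j < n | j < l) tt j l.
  rewrite [RHS]big_mkcond /=; apply: eq_bigr => j _.
  rewrite big_mkcond /= (eq_bigr (fun k => if k == l then (if j < l then tt j l else 0) else 0)).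
    by rewrite -big_mkcond big_pred1_eq.
  by move=> k _; case: eqP => [->|_]; case: ifP.
rewrite /s -E1 -E2 -big_split /=; apply: leq_sum => j _.
rewrite -big_split /=; apply: leq_sum => k jk.
rewrite big_mkcond big_bool /= /on_arc /tf /tt.
have [Ej|Nj] := eqVneq j l; have [Ek|Nk] := eqVneq k l.
- by move: jk; rewrite Ej Ek ltnn.
- have lk : l < k by rewrite -Ej.
  by rewrite Ej leqnn lk /= addn0 add0n.
- by rewrite Ek ltnn andbF /= add0n addn0.
- by [].
Qed.

Lemma s_needs l : load l <= 1 -> s l <= needs_adm t i l.
Proof.
move=> H; case N: (needs_adm t i l); first exact: leq_trans (s_load l) H.
move: N; rewrite /needs_adm => /negbT/existsPn N.
rewrite leqn0 addn_eq0; apply/andP; split; apply/eqP; apply: big1 => x lx.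
  move: (N l) => /existsPn /(_ x); rewrite lx eqxx /= lt0n negbK addn_eq0.
  by case/andP => /eqP.
move: (N x) => /existsPn /(_ l); rewrite lx eqxx orbT /= lt0n negbK addn_eq0.
by case/andP => _ /eqP.
Qed.

Lemma adms_sum : adms_on_ring t i = \sum_l (needs_adm t i l : nat).
Proof.
rewrite /adms_on_ring -sum1dep_card big_mkcond /=.
by apply: eq_bigr => l _; case: needs_adm.
Qed.

Lemma ring_bound : (forall l, load l <= 1) ->
  \sum_(j < n) \sum_(k < n | j < k) (t i j k false + t i j k true) <= adms_on_ring t i.
Proof.
move=> H; rewrite sum_s adms_sum; apply: leq_sum => l _; exact: s_needs.
Qed.
End RB.

Definition trips : seq (nat * nat * nat) := [:: (0,1,2); (0,3,4); (0,5,6); (0,7,8); (0,9,10); (0,11,12); (0,13,14); (1,3,5); (1,4,6); (1,7,9); (1,8,10); (1,11,13); (1,12,14); (2,3,6); (2,4,5); (2,7,10); (2,8,9); (2,11,14); (2,12,13); (3,7,11); (3,8,12); (3,9,13); (3,10,14); (4,7,12); (4,8,11); (4,9,14); (4,10,13); (5,7,13); (5,8,14); (5,9,11); (5,10,12); (6,7,14); (6,8,13); (6,9,12); (6,10,11)].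

Definition tn (i j k : nat) (b : bool) : nat :=
  let: (a, b', c) := nth (0, 0, 0) trips i in
  if b then ((j == a) && (k == c) : nat)
  else (((j == a) && (k == b')) || ((j == b') && (k == c)) : nat).

Definition tR : routing 15 35 := fun i j k b => tn i j k b.

Definition onN (j k l : nat) (b : bool) : bool :=
  if b then ~~ ((j <= l) && (l < k)) else (j <= l) && (l < k).

Definition LoadN (i l : nat) : nat :=
  sumn [seq sumn [seq (if j < k then (if onN j k l true then tn i j k true else 0)
      + (if onN j k l false then tn i j k false else 0) else 0) | k <- iota 0 15] | j <- iota 0 15].

Definition NeedN (i v : nat) : bool :=
  has (fun j => has (fun k => [&& j < k, (j == v) || (k == v) & 0 < tn i j k false + tn i j k true])
     (iota 0 15)) (iota 0 15).

Lemma check_traffic : all (fun j => all (fun k => (j < k) ==>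
   (sumn [seq tn i j k false + tn i j k true | i <- iota 0 35] == 1)) (iota 0 15)) (iota 0 15).
Proof. vm_compute. reflexivity. Qed.

Lemma check_load : all (fun i => all (fun l => LoadN i l <= 1) (iota 0 15)) (iota 0 35).
Proof. vm_compute. reflexivity. Qed.

Lemma check_adm : all (fun i => count (NeedN i) (iota 0 15) == 3) (iota 0 35).
Proof. vm_compute. reflexivity. Qed.

Lemma check_105 : sumn [seq sumn [seq (if j < k then 1 else 0) | k <- iota 0 15] | j <- iota 0 15] = 105.
Proof. vm_compute. reflexivity. Qed.

Lemma allI n (P : nat -> bool) (x : 'I_n) : all P (iota 0 n) -> P x.
Proof. by move/allP; apply; rewrite mem_iota /= ltn_ord. Qed.

Lemma load_eq (i : 'I_35) (l : 'I_15) :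
  \sum_(j < 15) \sum_(k < 15 | j < k) (\sum_(b : bool | on_arc j k l b) tR i j k b) = LoadN i l.
Proof.
apply: (@sum_iota _ _ (fun j : nat => sumn [seq (if j < k then (if onN j k l true then tn i j k true else 0)
      + (if onN j k l false then tn i j k false else 0) else 0) | k <- iota 0 15])) => j.
rewrite big_mkcond /=.
apply: (@sum_iota _ _ (fun k : nat => (if j < k then (if onN j k l true then tn i j k true else 0)
      + (if onN j k l false then tn i j k false else 0) else 0))) => k.
rewrite big_mkcond big_bool /=.
case: (j < k) => //.
Qed.

Lemma adm_eq (i : 'I_35) : adms_on_ring tR i = 3.
Proof.
rewrite /adms_on_ring (@card_iota _ _ (NeedN i)).
  by apply/eqP; exact: (@allI _ (fun i => count (NeedN i) (iota 0 15) == 3) i check_adm).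
move=> v; rewrite /needs_adm; apply: exists_iota => j; apply: exists_iota => k.
by [].
Qed.

Lemma feasR : feasible 1 (all_pairs 15) tR.
Proof.
split.
  move=> j k jk; rewrite traffic_all_pairs; last by rewrite neq_ltn jk.
  rewrite (@sum_iota _ _ (fun i => tn i j k false + tn i j k true)) //.
  have := @allI _ (fun j => all (fun k => (j < k) ==>
   (sumn [seq tn i j k false + tn i j k true | i <- iota 0 35] == 1)) (iota 0 15)) j check_traffic.
  by move/(@allI _ _ k); rewrite jk => /eqP.
move=> i l; rewrite load_eq.
exact: (@allI _ _ l (@allI _ (fun i => all (fun l => LoadN i l <= 1) (iota 0 15)) i check_load)).
Qed.

Theorem mainTheorem11 :
  (forall j k : 'I_15, j != k -> traffic (all_pairs 15) j k = 1) /\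
  is_min_cost 1 (all_pairs 15) 105 /\
  exists t : routing 15 35,
    feasible 1 (all_pairs 15) t /\ cost t = 105 /\
    forall i : 'I_35, adms_on_ring t i = 3.
Proof.
have costR : cost tR = 105.
  rewrite /cost (eq_bigr (fun _ => 3)); last by move=> i _; exact: adm_eq.
  by rewrite sum_nat_const card_ord.
split; first by move=> j k; exact: traffic_all_pairs.
split; last by exists tR; split; [exact: feasR | split; [exact: costR | exact: adm_eq]].
split; first by exists 35, tR; split; [exact: feasR | exact: costR].
move=> r t [F1 F2].
have -> : 105 = \sum_(j < 15) \sum_(k < 15 | j < k) traffic (all_pairs 15) j k.
  rewrite -check_105; symmetry.
  apply: (@sum_iota _ _ (fun j : nat => sumn [seq (if j < k then 1 else 0) | k <- iota 0 15])) => j.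
  rewrite big_mkcond /=; apply: (@sum_iota _ _ (fun k : nat => if j < k then 1 else 0)) => k.
  by case: ifP => // jk; rewrite traffic_all_pairs // neq_ltn jk.
rewrite (eq_bigr (fun j : 'I_15 => \sum_(i < r) \sum_(k < 15 | j < k) (t i j k false + t i j k true))); last first.
  by move=> j _; rewrite exchange_big; apply: eq_bigr => k jk; rewrite F1.
rewrite exchange_big /=.
rewrite /cost; apply: leq_sum => i _; apply: ring_bound => l; exact: F2.
Qed.
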